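(* For $n\ge1$ let $R_n(t)=\sum_{T'\in\mathcal{T}'_n}t^{\operatorname{cdes}(T')-1}$. Then $$\sum_{n\ge1}R_n(t)\frac{z^n}{n!}=z\,\overline{Q}(t,z),$$ where $\overline{Q}(t,z)=\sum_{n\ge0}\overline{Q}_n(t)\frac{z^n}{n!}$ and $\overline{Q}_n(t)=\sum_{\pi}t^{\operatorname{des}(\pi)}$ over all quasi-Stirling permutations $\pi$ of size $n$.
   Context: $\mathcal{T}_n$ is the set of plane (ordered) rooted trees with $n$ edges labeled bijectively by $\{1,\dots,n\}$, and $\mathcal{T}'_n\subseteq\mathcal{T}_n$ is the subset of trees whose root has exactly one child. For a sequence $\pi_1\cdots\pi_r$: $i\in\{1,\dots,r\}$ is a descent if $\pi_i>\pi_{i+1}$ or $i=r$, and $\operatorname{des}$ counts descents; $\operatorname{cdes}(\pi_1\cdots\pi_r)=|\{i\in\{1,\dots,r\}:\pi_i>\pi_{i+1}\}|$ with $\pi_{r+1}=\pi_1$. For a vertex $v$ of a tree $T\in\mathcal{T}_n$ whose children edges have labels $a_1,\dots,a_d$ from left to right: if $v$ is not the root and its parent edge has label $\ell$, $\operatorname{cdes}(v)=\operatorname{cdes}(\ell a_1\cdots a_d)$; if $v$ is the root, $\operatorname{cdes}(v)=\operatorname{des}(a_1\cdots a_d)$; and $\operatorname{cdes}(T)=\sum_v\operatorname{cdes}(v)$. A quasi-Stirling permutation of size $n$ is a permutation $\pi_1\cdots\pi_{2n}$ of $\{1,1,\dots,n,n\}$ with no indices $i<j<k<\ell$ with $\pi_i=\pi_k$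 and $\pi_j=\pi_\ell$ (for $n=0$ only the empty sequence). *)

(* Defs.v *)
From Stdlib Require List.
From HB Require Import structures.
From mathcomp Require Import all_boot all_order all_algebra.
Set Implicit Arguments. Unset Strict Implicit. Unset Printing Implicit Defensive.
Import GRing.Theory.

(* Plane (ordered) rooted trees whose edges carry natural-number labels:
   a node is the ordered list of its children, each child given together
   with the label of the edge joining it to its parent. *)
Inductive ltree : Type := LNode : seq (nat * ltree) -> ltree.

Fixpoint labels (T : ltree) : seq nat :=
  let: LNode cs := T in
  (fix go (cs : seq (nat * ltree)) : seq nat :=
     match cs with
     | [::] => [::]
     | (l, c) :: cs' => l :: labels c ++ go cs'
     end) cs.

Definition inT (n : nat) (T : ltree) : Prop := perm_eq (labels T) (iota 1 n).

Definition inT' (n : nat) (T : ltree) : Prop :=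
  inT n T /\ exists l c, T = LNode [:: (l, c)].

(* des(π_1..π_r): i is a descent if π_i > π_{i+1} or i = r *)
Definition des (s : seq nat) : nat :=
  count (fun p : nat * nat => p.2 < p.1) (zip s (behead s)) + (0 < size s).

Definition cdes (s : seq nat) : nat :=
  count (fun p : nat * nat => p.2 < p.1) (zip s (rot 1 s)).

(* contribution of a non-root vertex with parent edge label l, plus all its
   descendants *)
Fixpoint cdes_sub (l : nat) (T : ltree) {struct T} : nat :=
  let: LNode cs := T in
  cdes (l :: map fst cs) +
  (fix go (cs : seq (nat * ltree)) : nat :=
     match cs with
     | [::] => 0
     | (l', c) :: cs' => cdes_sub l' c + go cs'
     end) cs.

(* cdes(T) = Σ_v cdes(v), the root contributing des of its children labels *)
Definition cdes_tree (T : ltree) : nat :=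
  let: LNode cs := T in
  des (map fst cs) + \sum_(p <- cs) cdes_sub p.1 p.2.

Definition quasi_stirling (m : nat) (p : seq nat) : Prop :=
  perm_eq p (flatten [seq [:: i; i] | i <- iota 1 m]) /\
  ~ exists i j k l : nat,
      [/\ i < j, j < k, k < l & l < size p] /\
      nth 0 p i = nth 0 p k /\ nth 0 p j = nth 0 p l.

Local Open Scope ring_scope.

Definition Rpoly (s : seq ltree) : {poly rat} :=
  \sum_(T <- s) 'X^(cdes_tree T - 1).

Definition Qpoly (q : seq (seq nat)) : {poly rat} :=
  \sum_(p <- q) 'X^(des p).

(* Main.v *)
From Stdlib Require List.
Require Import Defs.
From HB Require Import structures.
From mathcomp Require Import all_boot all_order all_algebra.
From mathcomp Require Import zify.
Import GRing.Theory.
Set Implicit Arguments. Unset Strict Implicit. Unset Printing Implicit Defensive.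

Section ind.
Variables (P : ltree -> Prop) (PF : seq (nat * ltree) -> Prop).
Hypotheses (Hnil : PF [::])
  (Hcons : forall l c cs, P c -> PF cs -> PF ((l, c) :: cs))
  (Hnode : forall cs, PF cs -> P (LNode cs)).
Fixpoint ltree_ind2 (T : ltree) : P T :=
  match T with
  | LNode cs => Hnode
     ((fix go (cs : seq (nat * ltree)) : PF cs :=
        match cs with
        | [::] => Hnil
        | (l, c) :: cs' => Hcons l (ltree_ind2 c) (go cs')
        end) cs)
  end.
End ind.

Fixpoint tdfs (T : ltree) : seq nat :=
  let: LNode cs := T in
  (fix go (cs : seq (nat * ltree)) : seq nat :=
     match cs with
     | [::] => [::]
     | (l, c) :: cs' => l :: tdfs c ++ l :: go cs'
     end) cs.

Fixpoint relabel (f : nat -> nat) (T : ltree) : ltree :=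
  let: LNode cs := T in
  LNode ((fix go (cs : seq (nat * ltree)) : seq (nat * ltree) :=
     match cs with
     | [::] => [::]
     | (l, c) :: cs' => (f l, relabel f c) :: go cs'
     end) cs).

Lemma labels_nil : labels (LNode [::]) = [::]. Proof. by []. Qed.
Lemma labels_cons l c cs :
  labels (LNode ((l, c) :: cs)) = l :: labels c ++ labels (LNode cs).
Proof. by []. Qed.
Lemma dfs_nil : tdfs (LNode [::]) = [::]. Proof. by []. Qed.
Lemma dfs_cons l c cs :
  tdfs (LNode ((l, c) :: cs)) = l :: tdfs c ++ l :: tdfs (LNode cs).
Proof. by []. Qed.
Lemma relabel_nil f : relabel f (LNode [::]) = LNode [::]. Proof. by []. Qed.
Lemma relabel_cons f l c cs : exists cs',
  relabel f (LNode ((l, c) :: cs)) = LNode ((f l, relabel f c) :: cs') /\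
  relabel f (LNode cs) = LNode cs'.
Proof. by eexists; split. Qed.

Lemma count_dfs p T : count p (tdfs T) = 2 * count p (labels T).
Proof.
move: T; apply: (@ltree_ind2 (fun T => count p (tdfs T) = 2 * count p (labels T)) (fun cs => count p (tdfs (LNode cs)) = 2 * count p (labels (LNode cs)))) => //.
move=> l c cs IHc IHcs; have E x s : count p (x :: s) = p x + count p s by [].
rewrite dfs_cons labels_cons !(E, count_cat) IHc IHcs; lia.
Qed.

Lemma mem_dfs x T : (x \in tdfs T) = (x \in labels T).
Proof. by rewrite -!has_pred1 !has_count count_dfs muln_gt0. Qed.

Lemma relabel_labels f T : labels (relabel f T) = map f (labels T).
Proof.
move: T; apply: (@ltree_ind2 (fun T => labels (relabel f T) = map f (labels T)) (fun cs => labels (relabel f (LNode cs)) = map f (labels (LNode cs)))) => //.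
move=> l c cs IHc IHcs; have [cs' [-> E]] := relabel_cons f l c cs.
by rewrite labels_cons labels_cons -E IHc IHcs [map _ (_ :: _)]/= map_cat.
Qed.

Lemma relabel_dfs f T : tdfs (relabel f T) = map f (tdfs T).
Proof.
move: T; apply: (@ltree_ind2 (fun T => tdfs (relabel f T) = map f (tdfs T)) (fun cs => tdfs (relabel f (LNode cs)) = map f (tdfs (LNode cs)))) => //.
move=> l c cs IHc IHcs; have [cs' [-> E]] := relabel_cons f l c cs.
by rewrite dfs_cons dfs_cons -E IHc IHcs [map _ (_ :: _)]/= map_cat.
Qed.


Fixpoint nd (x : nat) (s : seq nat) : nat :=
  match s with [::] => 0 | y :: s' => (y < x) + nd y s' end.

Lemma nd_cat x s t : nd x (s ++ t) = nd x s + nd (last x s) t.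
Proof. by elim: s x => [|y s IH] x //=; rewrite IH addnA. Qed.

Definition dp := (fun p : nat * nat => p.2 < p.1).

Lemma count_zip_nd x s : count dp (zip (x :: s) s) = nd x s.
Proof. by elim: s x => [|y s IH] x //=; rewrite IH. Qed.

Lemma des_cons x s : des (x :: s) = nd x s + 1.
Proof. by rewrite /des /= count_zip_nd. Qed.

Lemma count_zip_rcons x s y : count dp (zip (x :: s) (rcons s y)) = nd x (rcons s y).
Proof. by elim: s x => [|z s IH] x //=; rewrite IH. Qed.

Lemma cdes_cons x s : cdes (x :: s) = nd x (rcons s x).
Proof. by rewrite /cdes rot1_cons count_zip_rcons. Qed.

Lemma cdes_subE l cs : cdes_sub l (LNode cs) =
  cdes (l :: map fst cs) + \sum_(p <- cs) cdes_sub p.1 p.2.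
Proof.
rewrite /=; congr (_ + _).
by elim: cs => [|[l' c] cs IH] /=; [rewrite big_nil | rewrite big_cons IH].
Qed.

Lemma cdes_sub_nd T l : cdes_sub l T = nd l (rcons (tdfs T) l).
Proof.
move: T l; apply: (@ltree_ind2 (fun T => forall l, cdes_sub l T = nd l (rcons (tdfs T) l))
  (fun cs => forall p0 l, nd p0 (rcons (tdfs (LNode cs)) l) =
     nd p0 (rcons (map fst cs) l) + \sum_(p <- cs) cdes_sub p.1 p.2)).
- by move=> p0 l; rewrite big_nil addn0.
- move=> a c cs IHc IHcs p0 l.
  rewrite dfs_cons big_cons /= rcons_cat /= nd_cat /= IHc IHcs.
  rewrite -!cats1 !nd_cat /=; lia.
- by move=> cs IH l; rewrite cdes_subE cdes_cons IH.
Qed.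


Definition sig n l x := if l < x then x - l else x + n - l.
Definition tau n l y := if y + l <= n then y + l else y + l - n.
Definition dist n a b := if b < a then b + n - a else b - a.
Fixpoint Dsum n x s := match s with [::] => 0 | y :: s' => dist n x y + Dsum n y s' end.

Ltac crush := repeat (case: ifP => ?); lia.

Section pts.
Variables n l : nat.
Hypothesis Hl : 0 < l <= n.
Lemma sig_rng x : 0 < x <= n -> 0 < sig n l x <= n.
Proof. rewrite /sig; crush. Qed.
Lemma sig_rng' x : 0 < x <= n -> x != l -> 0 < sig n l x <= n.-1.
Proof. move/eqP: (erefl x) => _ H /eqP H'; move: H H'; rewrite /sig; crush. Qed.
Lemma sig_inj x y : 0 < x <= n -> 0 < y <= n -> sig n l x = sig n l y -> x = y.
Proof. rewrite /sig; crush. Qed.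
Lemma sig_l : sig n l l = n.
Proof. rewrite /sig; crush. Qed.
Lemma tau_rng y : 0 < y <= n.-1 -> 0 < tau n l y <= n.
Proof. rewrite /tau; crush. Qed.
Lemma tau_neq y : 0 < y <= n.-1 -> tau n l y != l.
Proof. move=> H; apply/eqP; move: H; rewrite /tau; crush. Qed.
Lemma sig_tau y : 0 < y <= n.-1 -> sig n l (tau n l y) = y.
Proof. rewrite /tau; case: ifP => ?; rewrite /sig; crush. Qed.
Lemma tau_sig x : 0 < x <= n -> x != l -> tau n l (sig n l x) = x.
Proof. move=> H /eqP H'; move: H H'; rewrite /sig; case: ifP => ?; rewrite /tau; crush. Qed.
Lemma dist_sig a b : 0 < a <= n -> 0 < b <= n -> dist n (sig n l a) (sig n l b) = dist n a b.
Proof. rewrite /sig; case: ifP => ?; case: ifP => ?; rewrite /dist; crush. Qed.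
End pts.

Lemma Dtele n x s : all (fun y => 0 < y <= n) (x :: s) ->
  Dsum n x s + x = last x s + n * nd x s.
Proof.
elim: s x => [|y s IH] x /=; first lia.
move=> /and3P [Hx Hy Hs]; have := IH y; rewrite /= Hy Hs => /(_ isT) E.
rewrite /dist; case: ltnP => H; rewrite mulnDr; lia.
Qed.

Lemma Dsig n l x s : 0 < l <= n -> all (fun y => 0 < y <= n) (x :: s) ->
  Dsum n (sig n l x) (map (sig n l) s) = Dsum n x s.
Proof.
move=> Hl; elim: s x => [|y s IH] x //= /and3P [Hx Hy Hs].
by rewrite dist_sig // IH //= Hy.
Qed.

Lemma nd_rot n l a w : 0 < l <= n -> all (fun y => 0 < y <= n) (a :: w) ->
  nd a (rcons w a) = nd (sig n l a) (rcons (map (sig n l) w) (sig n l a)).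
Proof.
move=> Hl Hw.
have Ha : 0 < a <= n := allP Hw a (mem_head _ _).
have Hw0 z : z \in w -> 0 < z <= n by move=> Hz; apply: (allP Hw); rewrite inE Hz orbT.
have Hw' : all (fun y => 0 < y <= n) (a :: rcons w a).
  apply/allP => z; rewrite inE mem_rcons inE orbA orbb => /orP [/eqP -> //|]; exact: Hw0.
have Hs : all (fun y => 0 < y <= n) (sig n l a :: rcons (map (sig n l) w) (sig n l a)).
  apply/allP => z; rewrite inE mem_rcons inE orbA orbb => /orP [/eqP -> |/mapP [y Hy ->]];
  apply: sig_rng => //; exact: Hw0.
have E1 := Dtele Hw'; have E2 := Dtele Hs.
rewrite !last_rcons -map_rcons Dsig // in E2; rewrite last_rcons in E1.
have n0 : 0 < n by lia.
apply/eqP; rewrite -(eqn_pmul2l n0) -map_rcons; apply/eqP; lia.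
Qed.

Lemma nd_top n w : all (fun y => y < n) w -> nd n (rcons w n) = des w.
Proof.
case: w => [|y w] /=; first by rewrite ltnn.
move=> /andP [Hy Hw]; rewrite Hy des_cons -cats1 nd_cat /=.
have : last y w < n by have := mem_last y w; rewrite inE => /orP [/eqP ->|/(allP Hw)].
case: ltnP => //; lia.
Qed.


Definition NC (p : seq nat) : Prop :=
  ~ exists i j k l : nat,
      [/\ i < j, j < k, k < l & l < size p] /\
      nth 0 p i = nth 0 p k /\ nth 0 p j = nth 0 p l.

Lemma NC_sub x y z : NC (x ++ y ++ z) -> NC y.
Proof.
move=> H [i [j [k [l [[Hij Hjk Hkl Hl] [E1 E2]]]]]]; apply: H.
have hn p : p < size y -> nth 0 (x ++ y ++ z) (size x + p) = nth 0 y p.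
  by move=> Hp; rewrite nth_cat ltnNge leq_addr /= addKn nth_cat Hp.
exists (size x + i), (size x + j), (size x + k), (size x + l).
rewrite !hn; try lia; split=> //; split; try lia.
by rewrite !size_cat; lia.
Qed.

Section join.
Variables (a : nat) (u v : seq nat).
Local Notation w := (a :: u ++ a :: v).
Local Notation m := (size u).
Lemma size_w : size w = m + size v + 2.
Proof. by rewrite /= size_cat /=; lia. Qed.
Lemma nth0 : nth 0 w 0 = a. Proof. by []. Qed.
Lemma nthM : nth 0 w m.+1 = a.
Proof. by rewrite /= nth_cat ltnn subnn. Qed.
Lemma nthU p : 0 < p <= m -> nth 0 w p = nth 0 u p.-1.
Proof. by case: p => [|p] //= Hp; rewrite nth_cat Hp. Qed.
Lemma nthV p : m.+2 <= p -> nth 0 w p = nth 0 v (p - m.+2).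
Proof.
case: p => [|p] //= Hp.
have Hp' : size u <= p by lia.
rewrite nth_cat ltnNge Hp' /=.
have -> : p - size u = (p - m.+1).+1 by lia.
by [].
Qed.

Lemma loc p : p < size w ->
  (p = 0 /\ nth 0 w p = a) \/ (0 < p <= m /\ nth 0 w p \in u) \/
  (p = m.+1 /\ nth 0 w p = a) \/ (m.+2 <= p /\ nth 0 w p \in v).
Proof.
rewrite size_w => Hp.
case: (posnP p) => [->|p0]; first by left.
case: (leqP p m) => pm.
  right; left; rewrite nthU; last lia. split; first lia. apply: mem_nth; case: p {Hp} p0 pm => // p _ pm; exact: pm.
case: (eqVneq p m.+1) => [->|pm1]; first by right; right; left; rewrite nthM.
right; right; right; rewrite nthV; last lia. split; first lia. apply: mem_nth; change (p - (size u).+2 < @size nat v); lia.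
Qed.

Hypotheses (Hau : a \notin u) (Hav : a \notin v)
  (Hdis : forall x, x \in u -> x \notin v).

Lemma pair_loc p q : p < q -> q < size w -> nth 0 w p = nth 0 w q ->
  (p = 0 /\ q = m.+1) \/ (0 < p /\ q <= m) \/ (m.+2 <= p).
Proof.
move=> pq qs E.
have := loc (ltn_trans pq qs); have := loc qs.
move=> [[P2 V2]|[[P2 M2]|[[P2 V2]|[P2 M2]]]] [[P1 V1]|[[P1 M1]|[[P1 V1]|[P1 M1]]]];
  try lia; exfalso.
all: first
  [ by rewrite -E V1 in M2; move: Hau; rewrite M2
  | by rewrite -E V1 in M2; move: Hav; rewrite M2
  | by rewrite E V2 in M1; move: Hau; rewrite M1
  | by rewrite E V2 in M1; move: Hav; rewrite M1
  | by rewrite -E in M2; have := Hdis M1; rewrite M2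
  | by rewrite E in M1; have := Hdis M2; rewrite M1 ].
Qed.

Lemma NC_join : NC u -> NC v -> NC w.
Proof.
move=> Nu Nv [i [j [k [l [[Hij Hjk Hkl Hl] [E1 E2]]]]]].
have Hks : k < size w by lia.
have Hjs : j < size w by lia.
have Hls : l < size w by [].
have := pair_loc (ltn_trans Hjk Hkl) Hls E2.
have := pair_loc (ltn_trans Hij Hjk) Hks E1.
move=> [[P1 P2]|[[P1 P2]|P1]] [[Q1 Q2]|[[Q1 Q2]|Q1]]; try lia.
- apply: Nu; exists i.-1, j.-1, k.-1, l.-1.
  rewrite !nthU in E1 E2; try lia.
  split; [split; lia | by split].
- apply: Nv; exists (i - m.+2), (j - m.+2), (k - m.+2), (l - m.+2).
  rewrite !nthV in E1 E2; try lia.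
  split; [split; try lia | by split].
  move: Hls; rewrite size_w; lia.
Qed.
End join.

Section join2.
Variables (a : nat) (u v : seq nat).
Local Notation w := (a :: u ++ a :: v).
Local Notation m := (size u).
Lemma NC_cross x : NC w -> x \in u -> x \in v -> False.
Proof.
move=> H xu xv; apply: H.
exists 0, (index x u).+1, m.+1, (m.+2 + index x v).
have iu : index x u < @size nat u by rewrite index_mem.
have iv : index x v < @size nat v by rewrite index_mem.
rewrite nthM (@nthV _ _ _ (m.+2 + index x v)); last lia.
rewrite (@nthU _ _ _ (index x u).+1); last lia.
rewrite /= nth_index // addKn nth_index //.
split; [split; try lia | by split].
rewrite /= ?size_cat /=; lia.
Qed.
End join2.


Fixpoint parseF (f : nat) (w : seq nat) : seq (nat * ltree) :=
  match f with
  | 0 => [::]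
  | f'.+1 =>
    match w with
    | [::] => [::]
    | a :: rest =>
      (a, LNode (parseF f' (take (index a rest) rest))) ::
        parseF f' (drop (index a rest).+1 rest)
    end
  end.

Lemma parseF_cons f a rest : parseF f.+1 (a :: rest) =
  (a, LNode (parseF f (take (index a rest) rest))) ::
        parseF f (drop (index a rest).+1 rest).
Proof. by []. Qed.

Lemma parse_dfs f cs : size (tdfs (LNode cs)) <= f -> uniq (labels (LNode cs)) ->
  parseF f (tdfs (LNode cs)) = cs.
Proof.
elim: f cs => [|f IH] [|[a [cs']] cs] //; rewrite dfs_cons //.
rewrite labels_cons cons_uniq cat_uniq mem_cat negb_or => Hs /andP [/andP [Ha1 Ha2] /and3P [U1 D U2]].
have szc x t : size (x :: t) = (size t).+1 by [].
rewrite parseF_cons index_cat mem_dfs (negbTE Ha1) index_head addn0 take_size_cat //.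
rewrite -cat_rcons -(size_rcons (tdfs (LNode cs')) a) drop_size_cat //.
rewrite szc size_cat szc in Hs.
by rewrite !IH //; lia.
Qed.

Definition good (w : seq nat) := (forall x, x \in w -> count_mem x w = 2) /\ NC w.

Lemma dfs_parse f w : size w <= f -> good w -> tdfs (LNode (parseF f w)) = w.
Proof.
elim: f w => [|f IH] [|a rest] // Hs [Hc Hn].
have {}Hs : size rest <= f by [].
have ca := Hc a (mem_head _ _).
have ar : a \in rest.
  rewrite -has_pred1 has_count; move: ca => /=; rewrite eqxx; lia.
set u := take (index a rest) rest; set v := drop (index a rest).+1 rest.
have Er : rest = u ++ a :: v.
  by rewrite -[LHS](cat_take_drop (index a rest)) (drop_nth 0) ?index_mem // nth_index.
rewrite Er in Hc Hn Hs ca.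
have cau : count_mem a u = 0 /\ count_mem a v = 0.
  move: ca; rewrite /= count_cat /= eqxx; lia.
have au : a \notin u by apply/count_memPn; case: cau.
have av : a \notin v by apply/count_memPn; case: cau.
have Hgu : good u.
  split.
    move=> x xu; have := Hc x; rewrite inE mem_cat xu orbT => /(_ isT).
    have xa : (a == x) = false by apply/eqP => E; rewrite E xu in au.
    have xv : x \notin v by apply/negP => xv; exact: NC_cross Hn xu xv.
    rewrite /= xa count_cat /= xa (count_memPn xv); lia.
  exact: (@NC_sub [:: a] u (a :: v)).
have Hgv : good v.
  split.
    move=> x xv; have := Hc x; rewrite inE mem_cat inE xv !orbT => /(_ isT).
    have xa : (a == x) = false by apply/eqP => E; rewrite E xv in av.
    have xu : x \notin u by apply/negP => xu; exact: NC_cross Hn xu xv.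
    rewrite /= xa count_cat /= xa (count_memPn xu); lia.
  apply: (@NC_sub (a :: u ++ [:: a]) v [::]).
  by rewrite cats0 /= -catA.
rewrite parseF_cons -/u -/v.
rewrite dfs_cons !IH //; try by rewrite Er.
all: move: Hs; rewrite size_cat /=; lia.
Qed.

Definition doubled (s : seq nat) := flatten [seq [:: i; i] | i <- s].

Lemma count_doubled p s : count p (doubled s) = 2 * count p s.
Proof. by elim: s => [|x s IH] //=; rewrite IH; case: (p x) => /=; lia. Qed.


Lemma NC_dfs T : uniq (labels T) -> NC (tdfs T).
Proof.
move: T; apply: (@ltree_ind2 (fun T => uniq (labels T) -> NC (tdfs T))
  (fun cs => uniq (labels (LNode cs)) -> NC (tdfs (LNode cs)))) => //.
- by move=> _ [i [j [k [l [[_ _ _ H] _]]]]].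
- move=> a c cs IHc IHcs.
  rewrite labels_cons cons_uniq cat_uniq mem_cat negb_or => /andP [/andP [Ha1 Ha2] /and3P [U1 D U2]].
  rewrite dfs_cons; apply: NC_join; rewrite ?mem_dfs ?IHc ?IHcs //.
  move=> x; rewrite !mem_dfs => xc; apply/negP => xcs.
  by move/hasPn: D => /(_ x xcs); rewrite xc.
  exact: IHc. exact: IHcs.
Qed.

Lemma NC_map (f : nat -> nat) s : {in s &, injective f} -> NC s -> NC (map f s).
Proof.
move=> Hinj Hn [i [j [k [l [[H1 H2 H3 H4] [E1 E2]]]]]]; apply: Hn.
rewrite size_map in H4.
exists i, j, k, l; split; first by split.
rewrite !(nth_map 0 0) in E1 E2; try lia.
split; apply: Hinj => //; apply: mem_nth;
  match goal with |- is_true (?a < size ?s) => change (a < @size nat s) end; lia.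
Qed.

Lemma map_inj_eq (f : nat -> nat) s1 s2 : {in s1 ++ s2 &, injective f} ->
  map f s1 = map f s2 -> s1 = s2.
Proof.
elim: s1 s2 => [|x s1 IH] [|y s2] //= Hi [E1 E2].
rewrite (Hi x y) ?inE ?mem_cat ?inE ?eqxx ?orbT // (IH s2) //.
move=> a b Ha Hb; apply: Hi; rewrite inE mem_cat inE;
  [move: Ha | move: Hb]; rewrite mem_cat => /orP [->|->]; rewrite ?orbT //.
  all: by [].
Qed.

Lemma inP (T : eqType) (x : T) s : List.In x s <-> x \in s.
Proof.
elim: s => [|y s IH] //=; rewrite inE; split.
- by move=> [->|/IH ->]; rewrite ?eqxx ?orbT.
- by move=> /orP [/eqP ->|/IH]; [left|right].
Qed.

Lemma NoDup_uniq (T : eqType) (s : seq T) : List.NoDup s -> uniq s.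
Proof.
elim => //= x s' Hx _ ->; rewrite andbT; apply/negP => /(proj2 (inP _ _)); exact: Hx.
Qed.

Lemma In_map A B (f : A -> B) x s : List.In x s -> List.In (f x) (map f s).
Proof. by elim: s => //= y s IH [->|/IH]; [left|right]. Qed.

Lemma map_In A B (f : A -> B) y s : List.In y (map f s) -> exists x, List.In x s /\ y = f x.
Proof.
elim: s => //= x s IH [<-|/IH [z [Hz ->]]]; first by exists x; split; [left|].
by exists z; split; [right|].
Qed.

Lemma uniq_map_NoDup A (B : eqType) (f : A -> B) (P : A -> Prop) s :
  List.NoDup s -> (forall x, List.In x s -> P x) ->
  (forall x y, P x -> P y -> f x = f y -> x = y) -> uniq (map f s).
Proof.
move=> H; elim: H => //= x s' Hx _ IH HP Hinj.
rewrite IH; last 2 first.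
- by move=> z Hz; apply: HP; right.
- exact: Hinj.
rewrite andbT; apply/negP => Hin; have H1 := proj2 (inP _ _) Hin; case: (map_In H1) => z [Hz E].
have Pz : P z by apply: HP; right.
have Px : P x by apply: HP; left.
have Ezx := Hinj z x Pz Px (esym E).
by rewrite Ezx in Hz.
Qed.


Section main.
Variable m : nat.
Local Notation n := m.+1.

Lemma labels1 l c : labels (LNode [:: (l, c)]) = l :: labels c.
Proof. by rewrite labels_cons labels_nil cats0. Qed.

Section facts.
Variables (l : nat) (c : ltree).
Hypothesis HT : inT n (LNode [:: (l, c)]).

Lemma fl_rng : 0 < l <= n.
Proof.
have := perm_mem HT l; rewrite labels1 mem_head mem_iota => /esym; lia.
Qed.

Lemma fL x : x \in labels c -> 0 < x <= n /\ x != l.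
Proof.
move=> xL; have U := perm_uniq HT; rewrite labels1 iota_uniq /= in U.
have := perm_mem HT x; rewrite labels1 inE xL orbT mem_iota => /esym H.
split; first lia.
by apply/eqP => E; move: U; rewrite -E xL.
Qed.

Lemma fLc x : 0 < x <= n -> x != l -> x \in labels c.
Proof.
move=> H xl; have := perm_mem HT x; rewrite labels1 inE (negbTE xl) [_ || _]/= => ->.
by rewrite mem_iota; lia.
Qed.

Lemma fU : uniq (labels c).
Proof. by have := perm_uniq HT; rewrite labels1 iota_uniq /= => /andP []. Qed.

Lemma fD x : x \in tdfs c -> 0 < x <= n /\ x != l.
Proof. by rewrite mem_dfs; exact: fL. Qed.

Lemma sig_inj_L : {in labels c &, injective (sig n l)}.
Proof.
move=> x y /fL [Hx _] /fL [Hy _]; apply: sig_inj => //; exact: fl_rng.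
Qed.

Lemma perm_sigL : perm_eq (map (sig n l) (labels c)) (iota 1 m).
Proof.
have Hl := fl_rng.
apply: uniq_perm; first by rewrite map_inj_in_uniq ?fU //; exact: sig_inj_L.
  exact: iota_uniq.
move=> y; rewrite mem_iota; apply/mapP/idP.
  move=> [x /fL [Hx Hxl] ->]; have := sig_rng' Hl Hx Hxl => /=; lia.
move=> Hy; have Hy' : 0 < y <= n.-1 by rewrite /=; lia.
exists (tau n l y); last by rewrite sig_tau.
apply: fLc; [exact: tau_rng | exact: tau_neq].
Qed.

Lemma fQS : quasi_stirling m (map (sig n l) (tdfs c)).
Proof.
split.
  apply/permP => p; rewrite -/(doubled (iota 1 m)) count_doubled count_map count_dfs.
  by rewrite -count_map (permP perm_sigL).
apply: NC_map; last exact: NC_dfs fU.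
move=> x y /fD [Hx _] /fD [Hy _]; apply: sig_inj => //; exact: fl_rng.
Qed.

Lemma fdes : (cdes_tree (LNode [:: (l, c)]) - 1)%N = des (map (sig n l) (tdfs c)).
Proof.
have Hl := fl_rng.
rewrite /cdes_tree big_seq1 /= add1n subSS subn0 cdes_sub_nd.
rewrite (nd_rot Hl); last first.
  apply/allP => x; rewrite inE => /orP [/eqP -> //|/fD [] //].
rewrite sig_l // nd_top //.
apply/allP => y /mapP [x /fD [Hx Hxl] ->]; have := sig_rng' Hl Hx Hxl => /=; lia.
Qed.
End facts.
End main.


Definition Phi n T : nat * seq nat :=
  match T with LNode [:: (l, c)] => (l, map (sig n l) (tdfs c)) | _ => (0, [::]) end.

Section main2.
Variable m : nat.
Local Notation n := m.+1.

Lemma qs_good w : quasi_stirling m w ->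
  good w /\ (forall p, count p w = 2 * count p (iota 1 m)).
Proof.
move=> [H Hn].
have Hc p : count p w = 2 * count p (iota 1 m).
  by rewrite (permP H) -/(doubled (iota 1 m)) count_doubled.
split=> //; split=> // x xw.
have := Hc (pred1 x); rewrite (count_uniq_mem _ (iota_uniq 1 m)).
have : 0 < count_mem x w by rewrite -has_count has_pred1.
by case: (x \in iota 1 m) => /=; lia.
Qed.

Lemma construct l w : 0 < l <= n -> quasi_stirling m w ->
  exists T, inT' n T /\ Phi n T = (l, w).
Proof.
move=> Hl QS; have [G Hc] := qs_good QS.
set cs := parseF (size w) w.
have Ed : tdfs (LNode cs) = w := dfs_parse (leqnn _) G.
have PL : perm_eq (labels (LNode cs)) (iota 1 m).
  by apply/permP => p; have := Hc p; rewrite -Ed count_dfs => /eqP; rewrite eqn_pmul2l // => /eqP.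
have RL y : y \in labels (LNode cs) -> 0 < y <= n.-1.
  by rewrite (perm_mem PL) mem_iota /=; lia.
exists (LNode [:: (l, relabel (tau n l) (LNode cs))]); split.
  split; last by exists l, (relabel (tau n l) (LNode cs)).
  rewrite /inT labels1 relabel_labels; apply: uniq_perm.
  - rewrite cons_uniq map_inj_in_uniq ?(perm_uniq PL) ?iota_uniq ?andbT.
      by apply/mapP => -[y /RL yL E]; move: (tau_neq Hl yL); rewrite -E eqxx.
    move=> x y /RL xL /RL yL E.
    by rewrite -(sig_tau Hl xL) -(sig_tau Hl yL) E.
  - exact: iota_uniq.
  move=> x; rewrite inE mem_iota; apply/orP/idP.
    move=> [/eqP -> | /mapP [y /RL yL ->]]; first lia.
    by have := tau_rng Hl yL; lia.
  move=> H; case: (eqVneq x l) => [->|xl]; [by left|right].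
  have Hx : 0 < x <= n by lia.
  apply/mapP; exists (sig n l x); last by rewrite tau_sig.
  by rewrite (perm_mem PL) mem_iota; have := sig_rng' Hl Hx xl => /=; lia.
rewrite /Phi relabel_dfs Ed -map_comp; congr pair.
rewrite -[RHS]map_id; apply/eq_in_map => y yw /=.
by apply: sig_tau => //; apply: RL; rewrite -mem_dfs Ed.
Qed.

Lemma Phi_inj T1 T2 : inT' n T1 -> inT' n T2 -> Phi n T1 = Phi n T2 -> T1 = T2.
Proof.
move=> [H1 [l1 [c1 E1]]] [H2 [l2 [c2 E2]]]; subst T1 T2 => /= -[El Em]; subst l2.
have Hl := fl_rng H1.
have Ed : tdfs c1 = tdfs c2.
  apply: map_inj_eq Em => x y; rewrite !mem_cat => /orP [/(fD H1)|/(fD H2)] [Hx _]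
    /orP [/(fD H1)|/(fD H2)] [Hy _]; exact: sig_inj.
case: c1 Ed H1 Em => cs1; case: c2 H2 => cs2 H2 Ed H1 _.
have U1 := fU H1; have U2 := fU H2.
rewrite -(parse_dfs (leqnn (size (tdfs (LNode cs1)))) U1).
by rewrite {2}Ed parse_dfs // Ed.
Qed.
End main2.

Local Open Scope ring_scope.

Lemma big_In (A : Type) (s : seq A) (F G : A -> {poly rat}) :
  (forall T, List.In T s -> F T = G T) -> \sum_(T <- s) F T = \sum_(T <- s) G T.
Proof.
elim: s => [|x s IH] H; first by rewrite !big_nil.
rewrite !big_cons H /=; last by left.
by rewrite IH // => T HT; apply: H; right.
Qed.

Unset Implicit Arguments.
Theorem lemma2p4 (n : nat) (s : seq ltree) (q : seq (seq nat)) :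
  (1 <= n)%N ->
  List.NoDup s -> (forall T, List.In T s <-> inT' n T) ->
  List.NoDup q -> (forall p, List.In p q <-> quasi_stirling n.-1 p) ->
  (n`!%:R : rat)^-1 *: Rpoly s = ((n.-1)`!%:R : rat)^-1 *: Qpoly q.
Proof.
case: n => // m _ NDs Hs NDq Hq.
have PP : perm_eq (map (Phi m.+1) s) [seq (l, w) | l <- iota 1 m.+1, w <- q].
  apply: uniq_perm.
  - apply: (@uniq_map_NoDup _ _ _ (inT' m.+1)) => //.
      by move=> x /Hs.
    exact: Phi_inj.
  - apply: allpairs_uniq; [exact: iota_uniq | exact: NoDup_uniq |].
    by move=> [a b] [c d] _ _.
  move=> [l w]; apply/idP/idP.
    move=> Hin; have H1 := proj2 (inP _ _) Hin; case: (map_In H1) => T [HTs E].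
    have [HT [l' [c ET]]] := (Hs T).1 HTs; subst T.
    case: E => -> ->.
    apply/allpairsP; exists (l', map (sig m.+1 l') (tdfs c)); split => //.
      by rewrite [_.1]/= mem_iota; have := fl_rng HT; lia.
    by apply/inP; apply/(Hq _).2; exact: fQS HT.
  move/allpairsP => [[l' w'] [Hl Hw E]]; case: E => -> -> /=.
  have QS : quasi_stirling m w' by apply/(Hq _).1/inP.
  have Hl' : (0 < l' <= m.+1)%N by move: Hl; rewrite [_.1]/= mem_iota; lia.
  have [T [HT EP]] := construct Hl' QS.
  apply/inP; rewrite -EP; apply: In_map; exact/(Hs T).2.
have R : Rpoly s = Qpoly q *+ m.+1.
  rewrite /Rpoly.
  have -> : \sum_(T <- s) ('X^(cdes_tree T - 1) : {poly rat}) = \sum_(x <- map (Phi m.+1) s) 'X^(des x.2).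
    rewrite big_map; apply: big_In => T /Hs [HT [l [c ET]]]; subst T.
    by rewrite (fdes HT).
  rewrite (perm_big _ PP) big_allpairs.
  rewrite (eq_bigr (fun _ => Qpoly q)); last by [].
  rewrite -[iota 1 m.+1]/(index_iota 1 m.+2) sumr_const_nat.
  by rewrite subSS subn0.
rewrite R -scaler_nat scalerA factS natrM invfM mulrAC mulVf ?mul1r //.
by rewrite Num.Theory.pnatr_eq0.
Qed.
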